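(* Let $R$ be a commutative ring, $n\ge2$, and $\varepsilon\in{\rm E}_{2n}(R)$. Then there exists $\rho\in{\rm E}_{\psi_n}(R)$ such that $(1\perp\rho)\,\varepsilon\in{\rm ESp}_{2n}(R)$.
   Context: All rings are commutative with identity. ${\rm E}_m(R)$ is the subgroup of ${\rm SL}_m(R)$ generated by $E_{ij}(\lambda)=I_m+\lambda e_{ij}$ ($i\neq j$). $\psi_n=\sum_{i=1}^n e_{2i-1,2i}-\sum_{i=1}^n e_{2i,2i-1}$. $1\perp\rho$ denotes $\begin{pmatrix}1&0\\0&\rho\end{pmatrix}$. Let $\sigma$ be the permutation with $\sigma(2i)=2i-1$, $\sigma(2i-1)=2i$. For $z\in R$, $1\le i\ne j\le 2n$, set $se_{ij}(z)=I_{2n}+ze_{ij}$ if $i=\sigma(j)$, and $se_{ij}(z)=I_{2n}+ze_{ij}-(-1)^{i+j}ze_{\sigma(j)\sigma(i)}$ if $i\ne\sigma(j)$. ${\rm ESp}_{2n}(R)$ is the subgroup of ${\rm GL}_{2n}(R)$ generated by all $se_{ij}(z)$ (it is contained in $\{\alpha:\alpha^t\psi_n\alpha=\psi_n\}$). Elements of $R^m$ are row vectors, ${}^t$ is transpose. For an invertible alternating (of the form $\nu-\nu^t$) $2n\times2n$ matrix $\varphi$ write $\varphi=\begin{pmatrix}0&-c\\ c^t&\nu\end{pmatrix}$, $\varphi^{-1}=\begin{pmatrix}0&d\\ -d^t&\mu\end{pmatrix}$ with $c,d\in R^{2n-1}$, and set $\alpha_\varphi(v)=I_{2n-1}+d^tv\nu$,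 $\beta_\varphi(v)=I_{2n-1}+\mu v^tc$; ${\rm E}_\varphi(R)$ is the subgroup of ${\rm GL}_{2n-1}(R)$ generated by all $\alpha_\varphi(v),\beta_\varphi(v)$, $v\in R^{2n-1}$. *)

(* Defs.v *)
From HB Require Import structures.
From mathcomp Require Import all_boot all_order all_algebra.
Set Implicit Arguments. Unset Strict Implicit. Unset Printing Implicit Defensive.
Import GRing.Theory.
Local Open Scope ring_scope.

(* Indices are 0-based: the paper's index i (1-based) is our i-1.
   Parities of i+j are unchanged by the shift. *)

Inductive gen_grp (R : comPzRingType) (N : nat) (S : 'M[R]_N -> Prop)
  : 'M[R]_N -> Prop :=
| gen_one : gen_grp S 1%:M
| gen_mul s g : S s -> gen_grp S g -> gen_grp S (s *m g)
| gen_mulinv s s' g : S s -> s *m s' = 1%:M -> s' *m s = 1%:M ->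
    gen_grp S g -> gen_grp S (s' *m g).

Definition elem (R : comPzRingType) N (i j : 'I_N) (l : R) : 'M[R]_N :=
  1%:M + l *: delta_mx i j.

Definition E_grp (R : comPzRingType) N (A : 'M[R]_N) : Prop :=
  gen_grp (fun s => exists (i j : 'I_N) (l : R), i != j /\ s = elem i j l) A.

Definition psi (R : comPzRingType) N : 'M[R]_N :=
  \matrix_(k, l) (if ~~ odd k && (l == k.+1 :> nat) then 1
                  else if odd k && (l.+1 == k :> nat) then -1 else 0).

Definition sgm (k : nat) : nat := if odd k then k.-1 else k.+1.

Definition se (R : comPzRingType) N (i j : 'I_N) (z : R) : 'M[R]_N :=
  \matrix_(k, l)
    ((k == l)%:R + (if (k == i) && (l == j) then z else 0)
     - (if (i : nat) == sgm j then 0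
        else if ((k : nat) == sgm j) && ((l : nat) == sgm i)
             then (-1) ^+ (i + j) * z else 0)).

Definition ESp_grp (R : comPzRingType) N (A : 'M[R]_N) : Prop :=
  gen_grp (fun s => exists (i j : 'I_N) (z : R), i != j /\ s = se i j z) A.

(* For phi = [[0, -c],[c^t, nu]] and phi^{-1} = psi' = [[0, d],[-d^t, mu]] *)
Definition alpha_phi (R : comPzRingType) m (phi phiinv : 'M[R]_(1 + m))
  (v : 'rV[R]_m) : 'M[R]_m :=
  1%:M + (ursubmx phiinv)^T *m v *m drsubmx phi.

Definition beta_phi (R : comPzRingType) m (phi phiinv : 'M[R]_(1 + m))
  (v : 'rV[R]_m) : 'M[R]_m :=
  1%:M + drsubmx phiinv *m v^T *m (- ursubmx phi).

(* E_phi(R): generated by alpha_phi(v), beta_phi(v), where phiinv is the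
   (unique) inverse of phi. *)
Definition E_phi (R : comPzRingType) m (phi : 'M[R]_(1 + m)) (A : 'M[R]_m) : Prop :=
  gen_grp (fun s => exists phiinv : 'M[R]_(1 + m),
             phi *m phiinv = 1%:M /\ phiinv *m phi = 1%:M /\
             exists v, s = alpha_phi phi phiinv v \/ s = beta_phi phi phiinv v) A.

Definition perp1 (R : comPzRingType) m (rho : 'M[R]_m) : 'M[R]_(1 + m) :=
  block_mx 1%:M 0 0 rho.

(* Main.v *)
Require Import Defs.
From HB Require Import structures.
From mathcomp Require Import all_boot all_order all_algebra zify ring.
Set Implicit Arguments. Unset Strict Implicit. Unset Printing Implicit Defensive.
Import GRing.Theory.
Local Open Scope ring_scope.

Lemma sgm_lt p (i : 'I_(1 + p.*2.+3)) : (sgm i < 1 + p.*2.+3)%N.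
Proof.
have Hi := ltn_ord i; rewrite /sgm; case: ifP => Ho; first by lia.
have: (i : nat).+1 != p.*2.+4.
  apply/negP=> /eqP E; move: Ho; rewrite -[odd i]negbK -/(odd (i : nat).+1) E /=.
  by rewrite odd_double.
move: Hi; rewrite /= => Hi; lia.
Qed.

Definition sg p (i : 'I_(1 + p.*2.+3)) : 'I_(1 + p.*2.+3) := Ordinal (sgm_lt i).

Lemma sgmK x : sgm (sgm x) = x.
Proof.
rewrite /sgm; case Hx: (odd x).
  by case: x Hx => [|x] //= /negbTE ->.
by rewrite /= Hx.
Qed.

Lemma odd_sgm x : odd (sgm x) = ~~ odd x.
Proof.
rewrite /sgm; case Hx: (odd x).
  by case: x Hx => [|x] //= /negbTE ->.
by rewrite /= Hx.
Qed.

Lemma sgm_neq x : (sgm x == x) = false.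
Proof. by apply/negP => /eqP E; have := odd_sgm x; rewrite E; case: (odd x). Qed.

Lemma sgm_inj : injective sgm.
Proof. exact: can_inj sgmK. Qed.

Lemma sgm_eq x y : (sgm x == sgm y) = (x == y).
Proof. by apply/eqP/eqP => [/sgm_inj|->]. Qed.

Lemma sgm_sym x y : (x == sgm y) = (y == sgm x).
Proof. by rewrite -(sgm_eq x) sgmK eq_sym. Qed.

Lemma sign_sgm (R : pzRingType) x : (-1) ^+ (sgm x) = - (-1) ^+ x :> R.
Proof. by rewrite -signr_odd odd_sgm -[(-1) ^+ x]signr_odd; case: (odd x); rewrite ?expr0 ?expr1 ?opprK. Qed.

Lemma sgmE p (i : 'I_(1 + p.*2.+3)) : (sg i : nat) = sgm i. Proof. by []. Qed.

Lemma sgK p (i : 'I_(1 + p.*2.+3)) : sg (sg i) = i.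
Proof. by apply: val_inj; rewrite /= sgmK. Qed.

Lemma sum_ind (R : pzRingType) n (F : 'I_n -> R) x :
  \sum_(c < n) (x == c)%:R * F c = F x.
Proof.
rewrite (bigD1 x) //= eqxx mul1r big1 ?addr0 // => c /negbTE.
by rewrite eq_sym => ->; rewrite mul0r.
Qed.

Lemma sum_ind' (R : pzRingType) n (F : 'I_n -> R) x :
  \sum_(c < n) (c == x)%:R * F c = F x.
Proof. by under eq_bigr do rewrite eq_sym; rewrite sum_ind. Qed.

Lemma sum_indr (R : pzRingType) n (F : 'I_n -> R) x :
  \sum_(c < n) F c * (c == x)%:R = F x.
Proof.
rewrite (bigD1 x) //= eqxx mulr1 big1 ?addr0 // => c /negbTE ->.
by rewrite mulr0.
Qed.

Lemma psiE (R : comPzRingType) p (k l : 'I_(1 + p.*2.+3)) :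
  psi R _ k l = (l == sg k)%:R * (-1) ^+ k.
Proof.
rewrite mxE -val_eqE /= /sgm -[(-1) ^+ k]signr_odd; case Ho: (odd k) => /=.
- case: k Ho => [[|k]] //= Hk Ho.
  by rewrite eqSS; case: (l == k :> nat); rewrite ?mul1r ?mul0r ?expr1.
- by case: (l == _ :> nat); rewrite ?mul1r ?mul0r ?expr0.
Qed.

Lemma sg_sym p (a b : 'I_(1 + p.*2.+3)) : (a == sg b) = (b == sg a).
Proof. by rewrite -!val_eqE /= sgm_sym. Qed.

Lemma sg_neq p (a : 'I_(1 + p.*2.+3)) : (sg a == a) = false.
Proof. by rewrite -!val_eqE /= sgm_neq. Qed.

Lemma psiT (R : comPzRingType) p : (psi R (1 + p.*2.+3))^T = - psi R _.
Proof.
apply/matrixP => a b; rewrite [LHS]mxE [RHS]mxE !psiE sg_sym.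
case: eqP => [->|_] /=; last by rewrite !mul0r oppr0.
by rewrite sign_sgm !mul1r.
Qed.

Lemma psi2 (R : comPzRingType) p : psi R (1 + p.*2.+3) *m psi R _ = - 1%:M.
Proof.
apply/matrixP => a b; rewrite [LHS]mxE [RHS]mxE.
under eq_bigr do rewrite !psiE eq_sym mulrA.
under eq_bigr do rewrite -!mulrA.
rewrite sum_ind sgK sgmE sign_sgm mxE eq_sym.
case: eqP => [->|_] /=; last by rewrite !mul0r mulr0 oppr0.
by rewrite mul1r mulrN -exprD addnn -mul2n exprM sqrrN !expr1n.
Qed.

Lemma sum_rshift (R : pzRingType) m (F : 'I_(1 + m) -> R) :
  \sum_(k < m) F (rshift 1 k) = \sum_c F c - F ord0.
Proof.
rewrite big_ord_recl [F ord0 + _]addrC addrK; apply: eq_bigr => k _; congr F.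
by apply: val_inj.
Qed.

Lemma drsubN (R : pzRingType) m1 m2 n1 n2 (A : 'M[R]_(m1 + m2, n1 + n2)) :
  drsubmx (- A) = - drsubmx A.
Proof. by apply/matrixP => i j; rewrite !mxE. Qed.

Lemma ursubN (R : pzRingType) m1 m2 n1 n2 (A : 'M[R]_(m1 + m2, n1 + n2)) :
  ursubmx (- A) = - ursubmx A.
Proof. by apply/matrixP => i j; rewrite !mxE. Qed.

Lemma psi00 (R : comPzRingType) p : psi R (1 + p.*2.+3) ord0 ord0 = 0.
Proof. by rewrite psiE eq_sym sg_neq mul0r. Qed.

Lemma psi2E (R : comPzRingType) p (a b : 'I_(1 + p.*2.+3)) :
  \sum_c psi R _ a c * psi R _ c b = - (a == b)%:R.
Proof.
transitivity ((psi R _ *m psi R _) a b); first by rewrite [RHS]mxE.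
by rewrite psi2 !mxE.
Qed.

Lemma mulE (R : pzRingType) m n k (A : 'M[R]_(m, n)) (B : 'M[R]_(n, k)) i j :
  (A *m B) i j = \sum_c A i c * B c j.
Proof. by rewrite mxE. Qed.
Lemma trE (R : pzRingType) m n (A : 'M[R]_(m, n)) i j : A^T i j = A j i.
Proof. by rewrite mxE. Qed.
Lemma drE (R : pzRingType) m1 m2 n1 n2 (A : 'M[R]_(m1 + m2, n1 + n2)) i j :
  drsubmx A i j = A (rshift m1 i) (rshift n1 j).
Proof. by rewrite !mxE. Qed.
Lemma urE (R : pzRingType) m1 m2 n1 n2 (A : 'M[R]_(m1 + m2, n1 + n2)) i j :
  ursubmx A i j = A (lshift m2 i) (rshift n1 j).
Proof. by rewrite !mxE. Qed.
Lemma oppE (R : pzRingType) m n (A : 'M[R]_(m, n)) i j : (- A) i j = - A i j.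
Proof. by rewrite mxE. Qed.
Lemma addE (R : pzRingType) m n (A B : 'M[R]_(m, n)) i j : (A + B) i j = A i j + B i j.
Proof. by rewrite mxE. Qed.
Lemma subE (R : pzRingType) m n (A B : 'M[R]_(m, n)) i j : (A - B) i j = A i j - B i j.
Proof. by rewrite !mxE. Qed.
Lemma scaleE (R : pzRingType) m n a (A : 'M[R]_(m, n)) i j : (a *: A) i j = a * A i j.
Proof. by rewrite mxE. Qed.
Lemma oneE (R : pzRingType) n (i j : 'I_n) : (1%:M : 'M[R]_n) i j = (i == j)%:R.
Proof. by rewrite mxE. Qed.
Lemma zeroE (R : pzRingType) m n (i : 'I_m) (j : 'I_n) : (0 : 'M[R]_(m, n)) i j = 0.
Proof. by rewrite mxE. Qed.
Lemma deltaE (R : pzRingType) m n (a i : 'I_m) (b j : 'I_n) :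
  (delta_mx a b : 'M[R]_(m, n)) i j = ((i == a) && (j == b))%:R.
Proof. by rewrite mxE. Qed.
Lemma rowfE (R : pzRingType) n (F : 'I_n -> R) i j : (\row_k F k) i j = F j.
Proof. by rewrite mxE. Qed.


Definition entE := (rowfE, mulE, trE, drE, urE, oppE, addE, subE, scaleE, oneE, zeroE, deltaE).

Notation PSI R p := (psi R (1 + p.*2.+3)).

Lemma psi_swap (R : comPzRingType) p a b : PSI R p a b = - PSI R p b a.
Proof. by rewrite -[PSI R p a b]trE psiT oppE. Qed.

Lemma nu_dT (R : comPzRingType) p :
  drsubmx (PSI R p) *m (ursubmx (PSI R p))^T = 0.
Proof.
apply/matrixP => i j; rewrite !entE.
under eq_bigr do rewrite !entE.
rewrite (sum_rshift (fun c => PSI R p (rshift 1 i) c * PSI R p (lshift _ j) c)).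
have -> : lshift p.*2.+3 j = ord0 by apply: val_inj; rewrite /= (ord1 j).
rewrite psi00 mulr0 subr0.
under eq_bigr do rewrite [PSI R p ord0 _]psi_swap mulrN.
rewrite sumrN psi2E opprK.
by case: eqP => // /(congr1 val).
Qed.

Lemma e_nu (R : comPzRingType) p :
  ursubmx (PSI R p) *m drsubmx (PSI R p) = 0.
Proof.
apply/matrixP => i j; rewrite !entE.
under eq_bigr do rewrite !entE.
rewrite (sum_rshift (fun c => PSI R p (lshift _ i) c * PSI R p c (rshift 1 j))).
have -> : lshift p.*2.+3 i = ord0 by apply: val_inj; rewrite /= (ord1 i).
rewrite psi00 mul0r subr0 psi2E.
by case: eqP => [/(congr1 val)|]; rewrite ?oppr0.
Qed.

Lemma gen_mulg (R : comPzRingType) N (S : 'M[R]_N -> Prop) a b :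
  gen_grp S a -> gen_grp S b -> gen_grp S (a *m b).
Proof.
elim=> [|s g Ss _ IH|s s' g Ss h1 h2 _ IH] Hb; first by rewrite mul1mx.
- by rewrite -mulmxA; apply: gen_mul Ss (IH Hb).
- by rewrite -mulmxA; apply: gen_mulinv Ss h1 h2 (IH Hb).
Qed.

Lemma gen_gen (R : comPzRingType) N (S : 'M[R]_N -> Prop) s :
  S s -> gen_grp S s.
Proof. by move=> Ss; rewrite -[s]mulmx1; apply: gen_mul Ss (gen_one _). Qed.

Lemma gen_invgen (R : comPzRingType) N (S : 'M[R]_N -> Prop) s s' :
  S s -> s *m s' = 1%:M -> s' *m s = 1%:M -> gen_grp S s'.
Proof. by move=> Ss h1 h2; rewrite -[s']mulmx1; apply: gen_mulinv Ss h1 h2 (gen_one _). Qed.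

Lemma gen_inv (R : comPzRingType) N (S : 'M[R]_N -> Prop) a :
  (forall s, S s -> exists s', s *m s' = 1%:M /\ s' *m s = 1%:M) ->
  gen_grp S a -> exists b, gen_grp S b /\ a *m b = 1%:M /\ b *m a = 1%:M.
Proof.
move=> HS.
elim=> [|s g Ss _ [h [Gh [h1 h2]]]|s s' g Ss e1 e2 _ [h [Gh [h1 h2]]]].
- by exists 1%:M; split; [apply: gen_one| rewrite mul1mx].
- have [s' [e1 e2]] := HS s Ss.
  exists (h *m s'); split; first exact: gen_mulg Gh (gen_invgen Ss e1 e2).
  split; first by rewrite mulmxA -(mulmxA s) h1 mulmx1.
  by rewrite mulmxA -(mulmxA h) e2 mulmx1.
- exists (h *m s); split; first exact: gen_mulg Gh (gen_gen Ss).
  split; first by rewrite mulmxA -(mulmxA s') h1 mulmx1.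
  by rewrite mulmxA -(mulmxA h) e1 mulmx1.
Qed.

Lemma gen_tr (R : comPzRingType) N (S S' : 'M[R]_N -> Prop) a :
  (forall s, S s -> S' s^T) -> gen_grp S a -> gen_grp S' a^T.
Proof.
move=> HS; elim=> [|s g Ss _ IH|s s' g Ss h1 h2 _ IH].
- by rewrite trmx1; apply: gen_one.
- by rewrite trmx_mul; apply: gen_mulg IH (gen_gen (HS _ Ss)).
- rewrite trmx_mul; apply: gen_mulg IH (gen_invgen (HS _ Ss) _ _).
  + by rewrite -trmx_mul h2 trmx1.
  + by rewrite -trmx_mul h1 trmx1.
Qed.

Lemma psi_inv (R : comPzRingType) p :
  PSI R p *m (- PSI R p) = 1%:M /\ (- PSI R p) *m PSI R p = 1%:M.
Proof. by rewrite mulmxN mulNmx psi2 opprK. Qed.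

Lemma psi_inv_uniq (R : comPzRingType) p X :
  PSI R p *m X = 1%:M -> X = - PSI R p.
Proof.
move=> h; rewrite -[X]mul1mx -(proj2 (psi_inv R p)) -mulmxA h mulmx1 //.
Qed.

Lemma trmxD (R : pzRingType) m n (A B : 'M[R]_(m, n)) : (A + B)^T = A^T + B^T.
Proof. by apply/matrixP => i j; rewrite !mxE. Qed.
Lemma trmxN (R : pzRingType) m n (A : 'M[R]_(m, n)) : (- A)^T = - A^T.
Proof. by apply/matrixP => i j; rewrite !mxE. Qed.

Lemma alphaT (R : comPzRingType) p v :
  (alpha_phi (PSI R p) (- PSI R p) v)^T = beta_phi (PSI R p) (- PSI R p) v.
Proof.
rewrite /alpha_phi /beta_phi trmxD trmx1 !trmx_mul trmxK trmx_drsub psiT.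
by rewrite !drsubN ursubN !mulmxN !mulNmx mulmxA.
Qed.

Lemma betaT (R : comPzRingType) p v :
  (beta_phi (PSI R p) (- PSI R p) v)^T = alpha_phi (PSI R p) (- PSI R p) v.
Proof. by rewrite -alphaT trmxK. Qed.

Lemma alpha_inv (R : comPzRingType) p v :
  alpha_phi (PSI R p) (- PSI R p) v *m alpha_phi (PSI R p) (- PSI R p) (- v) = 1%:M.
Proof.
rewrite /alpha_phi; set X := (_ *m v *m _).
have -> : (ursubmx (- PSI R p))^T *m - v *m drsubmx (PSI R p) = - X by rewrite mulmxN mulNmx.
have XX : X *m X = 0.
  by rewrite /X -!mulmxA (mulmxA (drsubmx _)) ursubN trmxN mulmxN nu_dT oppr0 !(mulmx0, mul0mx).
by rewrite mulmxDl mul1mx mulmxDr mulmx1 mulmxN XX oppr0 addr0 subrK.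
Qed.

Lemma beta_inv (R : comPzRingType) p v :
  beta_phi (PSI R p) (- PSI R p) v *m beta_phi (PSI R p) (- PSI R p) (- v) = 1%:M.
Proof.
by rewrite -[LHS]trmxK trmx_mul !betaT -[in alpha_phi _ _ v](opprK v) alpha_inv trmx1.
Qed.

Definition Gphi (R : comPzRingType) m (phi : 'M[R]_(1 + m)) (s : 'M[R]_m) : Prop :=
  exists phiinv : 'M[R]_(1 + m),
             phi *m phiinv = 1%:M /\ phiinv *m phi = 1%:M /\
             exists v, s = alpha_phi phi phiinv v \/ s = beta_phi phi phiinv v.

Lemma Gphi_char (R : comPzRingType) p s :
  Gphi (PSI R p) s <->
  exists v, s = alpha_phi (PSI R p) (- PSI R p) v \/ s = beta_phi (PSI R p) (- PSI R p) v.
Proof.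
split; first by move=> [phiinv [h1 [h2 Hv]]]; rewrite -(psi_inv_uniq h1).
by move=> Hv; exists (- PSI R p); have [h1 h2] := psi_inv R p.
Qed.

Lemma Ephi_mul (R : comPzRingType) p a b :
  E_phi (PSI R p) a -> E_phi (PSI R p) b -> E_phi (PSI R p) (a *m b).
Proof. exact: gen_mulg. Qed.

Lemma Ephi_tr (R : comPzRingType) p a :
  E_phi (PSI R p) a -> E_phi (PSI R p) a^T.
Proof.
apply: gen_tr => s /Gphi_char [v [->|->]]; apply/Gphi_char; exists v.
- by right; rewrite alphaT.
- by left; rewrite betaT.
Qed.

Lemma Ephi_inv (R : comPzRingType) p a :
  E_phi (PSI R p) a -> exists b, E_phi (PSI R p) b /\ a *m b = 1%:M /\ b *m a = 1%:M.
Proof.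
apply: gen_inv => s /Gphi_char [v [->|->]].
- exists (alpha_phi (PSI R p) (- PSI R p) (- v)); split; first exact: alpha_inv.
  by rewrite -{2}(opprK v) alpha_inv.
- exists (beta_phi (PSI R p) (- PSI R p) (- v)); split; first exact: beta_inv.
  by rewrite -{2}(opprK v) beta_inv.
Qed.

Lemma Ephi_beta (R : comPzRingType) p v :
  E_phi (PSI R p) (beta_phi (PSI R p) (- PSI R p) v).
Proof. by apply: gen_gen; apply/Gphi_char; exists v; right. Qed.

Lemma Ephi_one (R : comPzRingType) p : E_phi (PSI R p) 1%:M.
Proof. exact: gen_one. Qed.

Lemma o1E p : (sg (ord0 : 'I_(1 + p.*2.+3)) : nat) = 1%N. Proof. by []. Qed.

Lemma rshift_eq m n (i j : 'I_n) : (rshift m i == rshift m j) = (i == j).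
Proof. by rewrite -val_eqE /= eqn_add2l val_eqE. Qed.

Lemma Ephi_col (R : comPzRingType) p (f : 'I_(1 + p.*2.+3) -> R) :
  f ord0 = 0 -> f (sg ord0) = 0 ->
  E_phi (PSI R p) (drsubmx (\matrix_(a, b) ((a == b)%:R + (b == sg ord0)%:R * f a))).
Proof.
move=> f0 f1.
set V := fun c : 'I_(1 + p.*2.+3) => (-1) ^+ (sg c) * f (sg c).
suff -> : drsubmx (\matrix_(a, b) ((a == b)%:R + (b == sg ord0)%:R * f a)) =
          beta_phi (PSI R p) (- PSI R p) (\row_k V (rshift 1 k)) by apply: Ephi_beta.
apply/matrixP => i j; rewrite /beta_phi drE mxE !entE big_ord1 !entE rshift_eq.
congr (_ + _).
have -> : lshift p.*2.+3 (ord0 : 'I_1) = ord0 by apply: val_inj.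
rewrite psiE expr0 mulr1.
case: (_ == _); last by rewrite mul0r mulr0n oppr0 mulr0.
rewrite mul1r mulr1n mulrN1 -[f _]opprK; congr (- _).
under eq_bigr do rewrite !entE mulNr.
have H := sum_rshift (fun c => PSI R p (rshift 1 i) c * V c); cbv beta in H.
rewrite sumrN H.
under eq_bigr do rewrite psiE eq_sym -mulrA.
rewrite sum_ind psiE /V sgK f1 !mulr0 subr0 mulrA -expr2 sqrr_sign mul1r.
done.
Qed.

Lemma seT (R : comPzRingType) N (i j : 'I_N) (z : R) : (se i j z)^T = se j i z.
Proof.
apply/matrixP => k l; rewrite !mxE [l == k]eq_sym [(l == i) && _]andbC.
by rewrite [(i : nat) == _]sgm_sym [(_ == sgm j) && _]andbC addnC.
Qed.

Lemma ESp_tr (R : comPzRingType) N (A : 'M[R]_N) : ESp_grp A -> ESp_grp A^T.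
Proof.
apply: gen_tr => s [i [j [z [ij ->]]]]; exists j, i, z; split; last by rewrite seT.
by rewrite eq_sym.
Qed.

Lemma ESp_mul (R : comPzRingType) N (A B : 'M[R]_N) :
  ESp_grp A -> ESp_grp B -> ESp_grp (A *m B).
Proof. exact: gen_mulg. Qed.

Lemma ESp_se (R : comPzRingType) N (i j : 'I_N) (z : R) : i != j -> ESp_grp (se i j z).
Proof. by move=> ij; apply: gen_gen; exists i, j, z. Qed.

Lemma perp1_mul (R : comPzRingType) m (a b : 'M[R]_m) :
  perp1 a *m perp1 b = perp1 (a *m b).
Proof. by rewrite /perp1 mulmx_block !(mulmx0, mul0mx, mulmx1, addr0, add0r). Qed.

Lemma perp1_one (R : comPzRingType) m : perp1 (1%:M : 'M[R]_m) = 1%:M.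
Proof. by rewrite /perp1 -scalar_mx_block. Qed.

Lemma perp1_tr (R : comPzRingType) m (a : 'M[R]_m) : (perp1 a)^T = perp1 a^T.
Proof. by rewrite /perp1 tr_block_mx !trmx0 trmx1. Qed.

Lemma perp1_drsub (R : comPzRingType) m (A : 'M[R]_(1 + m)) :
  (forall b, A ord0 b = (ord0 == b)%:R) -> (forall a, A a ord0 = (a == ord0)%:R) ->
  perp1 (drsubmx A) = A.
Proof.
move=> h0 h1; rewrite -{2}[A]submxK /perp1; congr block_mx.
- apply/matrixP => i j; rewrite !mxE (ord1 i) (ord1 j).
  have -> : lshift m (ord0 : 'I_1) = ord0 by apply: val_inj.
  by rewrite h0.
- apply/matrixP => i j; rewrite !mxE (ord1 i).
  have -> : lshift m (ord0 : 'I_1) = ord0 by apply: val_inj.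
  by rewrite h0.
- apply/matrixP => i j; rewrite !mxE (ord1 j).
  have -> : lshift m (ord0 : 'I_1) = ord0 by apply: val_inj.
  by rewrite h1.
Qed.

Definition Mw (R : comPzRingType) p (w : 'I_(1 + p.*2.+3) -> R) : 'M[R]_(1 + p.*2.+3) :=
  \matrix_(a, b) ((a == b)%:R + (a == ord0)%:R * w b +
                  (b == sg ord0)%:R * ((1 < a)%N%:R * ((-1) ^+ a * w (sg a)))).

Lemma sum_ind2 (R : pzRingType) n (F : 'I_n -> R) x Y :
  \sum_(c < n) F c * ((c == x)%:R * Y) = F x * Y.
Proof.
rewrite (bigD1 x) //= eqxx mul1r big1 ?addr0 // => c /negbTE ->.
by rewrite mul0r mulr0.
Qed.

Lemma Mw_mulE (R : comPzRingType) p w (B : 'M[R]_(1 + p.*2.+3)) a b :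
  (Mw w *m B) a b = B a b + (a == ord0)%:R * (\sum_c w c * B c b) +
     (1 < a)%N%:R * ((-1) ^+ a * w (sg a)) * B (sg ord0) b.
Proof.
rewrite mulE; under eq_bigr do rewrite mxE !mulrDl.
rewrite !big_split /= sum_ind mulr_sumr; congr (_ + _ + _).
- by apply: eq_bigr => c _; rewrite mulrA.
- under eq_bigr do rewrite mulrC.
  by rewrite sum_ind2 mulrC.
Qed.

Lemma se_entry (R : comPzRingType) p (i j c b : 'I_(1 + p.*2.+3)) (z : R) :
  se i j z c b = (c == b)%:R + (c == i)%:R * ((b == j)%:R * z) -
    (i != sgm j :> nat)%:R * ((c == sg j)%:R * ((b == sg i)%:R * ((-1) ^+ (i + j) * z))).
Proof.
rewrite mxE -!val_eqE /=.
case: (c == i :> nat); case: (b == j :> nat); rewrite /= ?(mul1r, mul0r, mulr0) //.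
all: case: (i == sgm j :> nat); rewrite /= ?(mul1r, mul0r, mulr0) //.
all: by case: (c == sgm j :> nat); case: (b == sgm i :> nat); rewrite /= ?(mul1r, mul0r, mulr0).
Qed.

Lemma se_sumE (R : comPzRingType) p (w : 'I_(1 + p.*2.+3) -> R) (i j b : 'I_(1 + p.*2.+3)) (z : R) :
  \sum_c w c * se i j z c b = w b + (b == j)%:R * (z * w i) -
    (i != sgm j :> nat)%:R * ((b == sg i)%:R * ((-1) ^+ (i + j) * z * w (sg j))).
Proof.
under eq_bigr do rewrite se_entry mulrBr mulrDr.
rewrite sumrB big_split /= sum_indr sum_ind2.
under [X in _ - X]eq_bigr do rewrite mulrCA.
rewrite -mulr_sumr sum_ind2.
ring.
Qed.

Lemma sg_eq p (a b : 'I_(1 + p.*2.+3)) : (sg a == sg b) = (a == b).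
Proof. by rewrite -!val_eqE /= sgm_eq. Qed.

Lemma Mw_step (R : comPzRingType) p (w : 'I_(1 + p.*2.+3) -> R) k z :
  w ord0 = 0 -> k != ord0 ->
  Mw w *m se ord0 k z =
  Mw (fun b => w b + (b == k)%:R * z -
        (b == sg ord0)%:R * ((1 < k)%N%:R * ((-1) ^+ k * z * w (sg k)))).
Proof.
move=> w0 k0; apply/matrixP => a b.
rewrite Mw_mulE se_sumE !se_entry [RHS]mxE w0.
move: k0; rewrite -!val_eqE /= => k0.
have -> : (0 != sgm k)%N = (1 < k)%N.
  by move: k0; rewrite /sgm /=; case: k => [[|[|k]]] //=; case: ifP.
have -> : (sgm a == k)%N = ((a : nat) == sgm k)%N by rewrite eq_sym sgm_sym.
rewrite sgm_eq (eq_sym (sgm 0)) [(sgm a == _)%N]sgm_eq (eq_sym 0%N) (negbTE k0).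
rewrite !add0n !mulr0 ?addr0 !mul0r ?subr0 ?addr0.
case: (@eqP _ (a : nat) (sgm k)) => [Ha|_].
- rewrite !Ha sign_sgm.
  have -> : (1 < sgm k)%N = (1 < k)%N.
    by move: k0; clear; rewrite /sgm; case: k => [[|[|[|k]]]] //= _ _; case: ifP.
  case k1 : (1 < k)%N.
  + have -> : (sgm k == 0)%N = false.
      by move: k1; clear; rewrite /sgm; case: k => [[|[|k]]] //= _ _; case: ifP.
    rewrite /=; ring.
  + rewrite /=; ring.
- case: (@eqP _ (a : nat) 0%N) => [Ha|_].
  + rewrite !Ha /=; ring.
  + rewrite /=; ring.
Qed.

Lemma Mw_ext (R : comPzRingType) p (w w' : 'I_(1 + p.*2.+3) -> R) :
  (forall b, w b = w' b) -> Mw w = Mw w'.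
Proof. by move=> H; apply/matrixP => a b; rewrite !mxE !H. Qed.

Lemma Mw_zero (R : comPzRingType) p : Mw (fun _ : 'I_(1 + p.*2.+3) => 0 : R) = 1%:M.
Proof. by apply/matrixP => a b; rewrite !mxE !mulr0 !addr0. Qed.

Lemma Mw_se1 (R : comPzRingType) p (w : 'I_(1 + p.*2.+3) -> R) t :
  w ord0 = 0 -> ESp_grp (Mw w) -> ESp_grp (Mw (fun b => w b + (b == sg ord0)%:R * t)).
Proof.
move=> w0 Hw.
have -> : Mw (fun b => w b + (b == sg ord0)%:R * t) = Mw w *m se ord0 (sg ord0) t.
  rewrite Mw_step //; apply: Mw_ext => b /=; rewrite mul0r mulr0 subr0 //.
apply: ESp_mul Hw (ESp_se _ _); by [].
Qed.

Lemma Mw_ESp_aux (R : comPzRingType) p d : (2 + d <= 1 + p.*2.+3)%N ->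
  forall w : 'I_(1 + p.*2.+3) -> R, w ord0 = 0 ->
  (forall b : 'I_(1 + p.*2.+3), (2 + d <= b)%N -> w b = 0) -> ESp_grp (Mw w).
Proof.
elim: d => [|d IH] Hd w w0 Hw.
- have := @Mw_se1 R p (fun _ => 0) (w (sg ord0)) (erefl (0 : R)).
  rewrite Mw_zero => /(_ (gen_one _)); congr ESp_grp; apply: Mw_ext => b.
  case: (b =P sg ord0) => [->|/eqP nb]; first by rewrite mul1r add0r.
  rewrite mul0r addr0; case: (b =P ord0) => [->|/eqP nb0]; first by rewrite w0.
  rewrite Hw //; move: nb nb0; rewrite -!val_eqE /=; case: b => [[|[|b]]] //.
- have Hk : (2 + d < 1 + p.*2.+3)%N by [].
  set k := Ordinal Hk.
  set v := fun b => if b == k then 0 else w b.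
  have v0 : v ord0 = 0 by rewrite /v; case: (_ == _).
  have Hv : ESp_grp (Mw v).
    apply: IH => //; first by apply: ltnW.
    move=> b hb; rewrite /v; case: eqP => // /eqP nbk; apply: Hw.
    by move: nbk hb; rewrite -val_eqE /= => nbk hb; lia.
  have k0 : k != ord0 by rewrite -val_eqE.
  have := ESp_mul Hv (ESp_se (w k) (_ : ord0 != k)).
  rewrite eq_sym => /(_ k0).
  rewrite Mw_step // => Hv'.
  set v' := (fun b => _) in Hv'.
  have v'0 : v' ord0 = 0 by rewrite /v' v0 add0r /= mul0r mul0r subr0.
  have := Mw_se1 (w (sg ord0) - v' (sg ord0)) v'0 Hv'.
  congr ESp_grp; apply: Mw_ext => b.
  rewrite /v' /v.
  case: (b =P sg ord0) => [->|/eqP nb].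
  + have -> : (sg ord0 == k) = false by rewrite -val_eqE.
    rewrite /=. ring.
  + case: (b =P k) => [->|/eqP nbk].
    * rewrite /=; ring.
    * rewrite /=; ring.
Qed.

Lemma Mw_ESp (R : comPzRingType) p (w : 'I_(1 + p.*2.+3) -> R) :
  w ord0 = 0 -> ESp_grp (Mw w).
Proof.
move=> w0; apply: (@Mw_ESp_aux R p p.*2.+2) => // b hb.
by have := ltn_ord b; rewrite addnS add2n in hb; lia.
Qed.

Definition Tset (R : comPzRingType) p (A : 'M[R]_(1 + p.*2.+3)) :=
  exists tau s, E_phi (PSI R p) tau /\ ESp_grp s /\ A = perp1 tau *m s.

Definition Xr (R : comPzRingType) N (w : 'rV[R]_N.+1) : 'M[R]_N.+1 :=
  1%:M + delta_mx ord0 ord0 *m w.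
Definition Xc (R : comPzRingType) N (u : 'cV[R]_N.+1) : 'M[R]_N.+1 :=
  1%:M + u *m delta_mx ord0 ord0.

Lemma core_row (R : comPzRingType) p (w : 'rV[R]_(1 + p.*2.+3)) :
  w ord0 ord0 = 0 -> Tset (Xr w).
Proof.
move=> w0.
set wf := fun b => w ord0 b.
set f := fun a : 'I_(1 + p.*2.+3) => - ((1 < a)%N%:R * ((-1) ^+ a * wf (sg a))).
set A := \matrix_(a, b) ((a == b)%:R + (b == sg ord0)%:R * f a) : 'M[R]_(1 + p.*2.+3).
have f0 : f ord0 = 0 by rewrite /f /= mul0r oppr0.
have f1 : f (sg ord0) = 0 by rewrite /f /= mul0r oppr0.
exists (drsubmx A), (Mw wf); split; first exact: Ephi_col.
split; first by apply: Mw_ESp.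
rewrite perp1_drsub; last first.
- by move=> a; rewrite mxE (eq_sym ord0 (sg ord0)) sg_neq mul0r addr0.
- by move=> b; rewrite mxE f0 mulr0 addr0.
apply/matrixP => a b; rewrite /Xr !entE big_ord1 !entE.
under eq_bigr do rewrite [A _ _]mxE mulrDl -mulrA.
rewrite big_split /= sum_ind sum_ind' !mxE /f /wf /= eqxx andbT.
rewrite (eq_sym (sg ord0) b); ring.
Qed.

Lemma Ephi_row (R : comPzRingType) p (f : 'I_(1 + p.*2.+3) -> R) :
  f ord0 = 0 -> f (sg ord0) = 0 ->
  E_phi (PSI R p) (drsubmx (\matrix_(a, b) ((a == b)%:R + (a == sg ord0)%:R * f b))).
Proof.
move=> f0 f1; have := Ephi_tr (Ephi_col f0 f1); rewrite trmx_drsub.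
congr E_phi; congr drsubmx; apply/matrixP => a b; rewrite !mxE eq_sym //.
Qed.

Lemma Mw_sumT (R : comPzRingType) p (w h : 'I_(1 + p.*2.+3) -> R) b :
  \sum_i h i * Mw w b i = h b + (b == ord0)%:R * (\sum_i h i * w i) +
     h (sg ord0) * ((1 < b)%N%:R * ((-1) ^+ b * w (sg b))).
Proof.
under eq_bigr do rewrite mxE !mulrDr.
rewrite !big_split /=.
under [X in _ + X + _]eq_bigr do rewrite mulrCA.
rewrite -mulr_sumr.
under eq_bigr do rewrite eq_sym.
by rewrite sum_indr sum_ind2.
Qed.

Lemma core_col (R : comPzRingType) p (u : 'cV[R]_(1 + p.*2.+3)) :
  u ord0 ord0 = 0 -> Tset (Xc u).
Proof.
move=> u0.
set uf := fun a => u a ord0.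
set h := fun b : 'I_(1 + p.*2.+3) => (1 < b)%N%:R * ((-1) ^+ b * uf (sg b)).
set hu := \sum_b h b * uf b.
set ut := fun a => uf a + (a == sg ord0)%:R * hu.
set B := \matrix_(a, b) ((a == b)%:R + (a == sg ord0)%:R * - h b) : 'M[R]_(1 + p.*2.+3).
have h0 : - h ord0 = 0 by rewrite /h /= mul0r oppr0.
have h1 : - h (sg ord0) = 0 by rewrite /h /= mul0r oppr0.
exists (drsubmx B), (Mw ut)^T; split; first exact: (Ephi_row h0 h1).
split; first by apply/ESp_tr/Mw_ESp; rewrite /ut /uf /= mul0r addr0.
rewrite perp1_drsub; last first.
- by move=> a; rewrite mxE h0 mulr0 addr0.
- by move=> b; rewrite mxE (eq_sym ord0 (sg ord0)) sg_neq mul0r addr0.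
apply/matrixP => a b; rewrite /Xc !entE big_ord1 !entE.
under eq_bigr do rewrite [B _ _]mxE trE mulrDl -mulrA.
rewrite big_split /= sum_ind -mulr_sumr.
under eq_bigr do rewrite mulNr.
rewrite sumrN Mw_sumT -[h (sg ord0)]opprK h1 oppr0 mul0r addr0.
have -> : \sum_i h i * ut i = hu.
  rewrite /ut; under eq_bigr do rewrite mulrDr.
  by rewrite big_split /= sum_ind2 -[h _]opprK h1 oppr0 mul0r addr0.
rewrite [Mw _ _ _]mxE /ut sg_eq /h /uf (eq_sym b a).
case: (b =P ord0) => [->|_] /=; rewrite ?(eq_sym ord0 a); ring.
Qed.

Lemma perp1_col0 (R : comPzRingType) m (t : 'M[R]_m) (a : 'I_(1 + m)) :
  perp1 t a ord0 = (a == ord0)%:R.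
Proof.
have -> : (ord0 : 'I_(1 + m)) = lshift m (ord0 : 'I_1) by apply: val_inj.
case: a => [[|a] Ha].
- have -> : Ordinal Ha = lshift m (ord0 : 'I_1) by apply: val_inj.
  by rewrite /perp1 block_mxEul eqxx mxE.
- have Ha' : (a < m)%N by [].
  have -> : Ordinal Ha = rshift 1 (Ordinal Ha') by apply: val_inj.
  by rewrite /perp1 block_mxEdl mxE.
Qed.

Lemma perp1_row0 (R : comPzRingType) m (t : 'M[R]_m) (a : 'I_(1 + m)) :
  perp1 t ord0 a = (ord0 == a)%:R.
Proof. by rewrite -[perp1 t ord0 a]trE perp1_tr perp1_col0 eq_sym. Qed.

Lemma perp1_e0c (R : comPzRingType) m (t : 'M[R]_m) :
  perp1 t *m (delta_mx ord0 ord0 : 'cV[R]_(1 + m)) = delta_mx ord0 ord0.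
Proof.
apply/matrixP => a x; rewrite mulE deltaE (ord1 x) eqxx andbT.
under eq_bigr do rewrite deltaE eqxx andbT.
by rewrite sum_indr perp1_col0.
Qed.

Lemma perp1_e0r (R : comPzRingType) m (t : 'M[R]_m) :
  (delta_mx ord0 ord0 : 'rV[R]_(1 + m)) *m perp1 t = delta_mx ord0 ord0.
Proof.
apply/matrixP => x a; rewrite mulE deltaE (ord1 x) eqxx /=.
under eq_bigr do rewrite deltaE eqxx /=.
by rewrite sum_ind' perp1_row0 eq_sym.
Qed.

Lemma T_one (R : comPzRingType) p : Tset (1%:M : 'M[R]_(1 + p.*2.+3)).
Proof.
exists 1%:M, 1%:M; split; first exact: gen_one.
by split; [exact: gen_one | rewrite perp1_one mulmx1].
Qed.

Lemma T_Xr (R : comPzRingType) p (w : 'rV[R]_(1 + p.*2.+3)) A :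
  w ord0 ord0 = 0 -> Tset A -> Tset (Xr w *m A).
Proof.
move=> w0 [t [s [Et [Es ->]]]].
have w'0 : (w *m perp1 t) ord0 ord0 = 0.
  rewrite mulE; under eq_bigr do rewrite perp1_col0.
  by rewrite sum_indr.
have [t1 [s1 [Et1 [Es1 E1]]]] := core_row w'0.
rewrite mulmxA.
have -> : Xr w *m perp1 t = perp1 t *m Xr (w *m perp1 t).
  by rewrite /Xr mulmxDl mulmxDr mul1mx mulmx1 !mulmxA perp1_e0c.
rewrite E1 mulmxA perp1_mul -!mulmxA.
exists (t *m t1), (s1 *m s); split; first exact: Ephi_mul.
by split; [exact: ESp_mul|].
Qed.

Lemma T_Xc (R : comPzRingType) p (u : 'cV[R]_(1 + p.*2.+3)) A :
  u ord0 ord0 = 0 -> Tset A -> Tset (Xc u *m A).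
Proof.
move=> u0 [t [s [Et [Es ->]]]].
have [t' [Et' [tt' t't]]] := Ephi_inv Et.
have u'0 : (perp1 t' *m u) ord0 ord0 = 0.
  rewrite mulE; under eq_bigr do rewrite perp1_row0.
  by rewrite sum_ind.
have [t1 [s1 [Et1 [Es1 E1]]]] := core_col u'0.
rewrite mulmxA.
have -> : Xc u *m perp1 t = perp1 t *m Xc (perp1 t' *m u).
  rewrite /Xc mulmxDl mulmxDr mul1mx mulmx1 !mulmxA perp1_mul tt' perp1_one mul1mx.
  by rewrite -mulmxA perp1_e0r.
rewrite E1 mulmxA perp1_mul -!mulmxA.
exists (t *m t1), (s1 *m s); split; first exact: Ephi_mul.
by split; [exact: ESp_mul|].
Qed.

Lemma elem_comm (R : comPzRingType) p (i j : 'I_(1 + p.*2.+3)) (l : R) :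
  i != j -> i != ord0 -> j != ord0 ->
  elem i j l = elem i ord0 l *m (elem ord0 j 1 *m (elem i ord0 (- l) *m elem ord0 j (-1))).
Proof.
move=> ij i0 j0; rewrite /elem.
rewrite !(mulmxDl, mulmxDr, mul1mx, mulmx1, mulmxA).
rewrite -!(scalemxAl, scalemxAr) !mul_delta_mx_cond.
rewrite (negbTE j0) [j == i]eq_sym (negbTE ij) [ord0 == i]eq_sym (negbTE i0) eqxx.
rewrite !mulr0n !mul0mx !mulr1n.
apply/matrixP => a b; rewrite !mxE; ring.
Qed.

Lemma elem_inv (R : comPzRingType) N (i j : 'I_N) (l : R) :
  i != j -> elem i j l *m elem i j (- l) = 1%:M.
Proof.
move=> ij; rewrite /elem.
rewrite !(mulmxDl, mulmxDr, mul1mx, mulmx1, mulmxA).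
rewrite -!(scalemxAl, scalemxAr) !mul_delta_mx_cond.
rewrite [j == i]eq_sym (negbTE ij).
apply/matrixP => a b; rewrite !mxE; ring.
Qed.

Lemma elem_row (R : comPzRingType) p (j : 'I_(1 + p.*2.+3)) (l : R) :
  elem ord0 j l = Xr (l *: delta_mx ord0 j).
Proof. by rewrite /elem /Xr -scalemxAr mul_delta_mx. Qed.

Lemma elem_col (R : comPzRingType) p (i : 'I_(1 + p.*2.+3)) (l : R) :
  elem i ord0 l = Xc (l *: delta_mx i ord0).
Proof. by rewrite /elem /Xc -scalemxAl mul_delta_mx. Qed.

Lemma T_row (R : comPzRingType) p (j : 'I_(1 + p.*2.+3)) (l : R) A :
  j != ord0 -> Tset A -> Tset (elem ord0 j l *m A).
Proof.
move=> j0 HA; rewrite elem_row; apply: T_Xr HA.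
by rewrite scaleE deltaE eqxx /= eq_sym (negbTE j0) mulr0.
Qed.

Lemma T_col (R : comPzRingType) p (i : 'I_(1 + p.*2.+3)) (l : R) A :
  i != ord0 -> Tset A -> Tset (elem i ord0 l *m A).
Proof.
move=> i0 HA; rewrite elem_col; apply: T_Xc HA.
by rewrite scaleE deltaE eqxx andbT eq_sym (negbTE i0) mulr0.
Qed.

Lemma T_elem (R : comPzRingType) p (i j : 'I_(1 + p.*2.+3)) (l : R) A :
  i != j -> Tset A -> Tset (elem i j l *m A).
Proof.
move=> ij HA; move: ij.
case: (i =P ord0) => [-> ij | /eqP i0 ij].
  by apply: T_row => //; rewrite eq_sym.
case: (j =P ord0) => [-> | /eqP j0]; first by apply: T_col.
rewrite (elem_comm l ij i0 j0) !mulmxA -!mulmxA.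
apply: T_col => //; apply: T_row => //; apply: T_col => //; exact: T_row.
Qed.

Lemma E_T (R : comPzRingType) p (A : 'M[R]_(1 + p.*2.+3)) : E_grp A -> Tset A.
Proof.
elim=> [|s g [i [j [l [ij ->]]]] _ IH|s s' g [i [j [l [ij ->]]]] h1 h2 _ IH].
- exact: T_one.
- exact: T_elem.
- have -> : s' = elem i j (- l).
    by rewrite -[s']mulmx1 -(elem_inv l ij) mulmxA h2 mul1mx.
  exact: T_elem.
Qed.

Unset Implicit Arguments.

Theorem lemma4p3 (R : comPzRingType) (n : nat) (hn : (2 <= n)%N)
  (eps : 'M[R]_(1 + (n.*2).-1)) :
  E_grp eps ->
  exists rho : 'M[R]_((n.*2).-1),
    E_phi (psi R (1 + (n.*2).-1)) rho /\ ESp_grp (perp1 rho *m eps).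
Proof.
case: n hn eps => [|[|p]] // _ eps HE.
change ('M[R]_(1 + p.*2.+3)) in eps.
change (exists rho : 'M[R]_(p.*2.+3),
    E_phi (PSI R p) rho /\ ESp_grp (perp1 rho *m eps)).
have [t [s [Et [Es E]]]] := @E_T R p eps HE.
have [t' [Et' [h1 h2]]] := Ephi_inv Et.
exists t'; split; first exact: Et'.
by rewrite E mulmxA perp1_mul h2 perp1_one mul1mx.
Qed.
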